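(* Let $d,a_1,\ldots,a_n$ be positive integers and $c_1,\ldots,c_n\ge 0$ integers. Then the ideal $x_1^{c_1}\cdots x_n^{c_n}I_{(d;a_1,\ldots,a_n)}$ can be extended by linear quotients to $I_{(d+\sum_{i=1}^nc_i;\,a_1+c_1,\ldots,a_n+c_n)}$.
   Context: $S=K[x_1,\ldots,x_n]$, $G(I)$ = minimal monomial generating set. For positive integers $d,a_1,\dots,a_n$, $I_{(d;a_1,\ldots,a_n)}\subset S$ is the monomial ideal generated by all monomials $u$ of degree $d$ with $\deg_{x_i}(u)\le a_i$ for all $i$ (ideal of Veronese type). For monomial ideals $I\subseteq J$ with $G(I)\subseteq G(J)$, $I$ can be extended by linear quotients to $J$ if $G(J)\setminus G(I)$ can be ordered $v_1,\ldots,v_m$ such that for each $i=0,\ldots,m-1$ the colon ideal $(G(I),v_1,\ldots,v_i):v_{i+1}$ is generated by variables. *)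

(* Defs.v *)
From mathcomp Require Import all_boot all_algebra.
From mathcomp Require Import mpoly.
Set Implicit Arguments. Unset Strict Implicit. Unset Printing Implicit Defensive.
Import GRing.Theory.
Local Open Scope ring_scope.

(* Monomials of S = K[x_1,...,x_n] are encoded by their exponent vectors
   m : 'X_{1..n}; the monomial itself is 'X_[m] : {mpoly K[n]}. *)

Definition in_mon_ideal (K : fieldType) (n : nat) (G : pred 'X_{1..n})
    (p : {mpoly K[n]}) : Prop :=
  exists (gs : seq 'X_{1..n}) (rs : seq {mpoly K[n]}),
    [/\ all G gs, size rs = size gs &
        p = \sum_(i < size gs) rs`_i * 'X_[nth 0%MM gs i]].

Definition colon_gen_by_vars (K : fieldType) (n : nat) (G : pred 'X_{1..n})
    (v : 'X_{1..n}) : Prop :=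
  exists S : {set 'I_n}, forall p : {mpoly K[n]},
    in_mon_ideal G (p * 'X_[v]) <->
    in_mon_ideal [pred m : 'X_{1..n} | [exists i in S, m == U_(i)%MM]] p.

(* I (with minimal monomial generating set GI) can be extended by linear
   quotients to J (with minimal monomial generating set GJ): GI is a subset
   of GJ and GJ \ GI can be ordered v_1,...,v_m so that for every
   i = 0..m-1, (GI, v_1,...,v_i) : v_{i+1} is generated by variables. *)
Definition ext_lin_quot (K : fieldType) (n : nat) (GI GJ : pred 'X_{1..n})
    : Prop :=
  {subset GI <= GJ} /\
  exists vs : seq 'X_{1..n},
    [/\ uniq vs,
        (forall m, m \in vs = GJ m && ~~ GI m) &
        forall i, (i < size vs)%N ->
          colon_gen_by_vars K
            [pred m | GI m || (m \in take i vs)] (nth 0%MM vs i)].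

(* G(I_(d; a_1..a_n)): all monomials u of degree d with deg_{x_i} u <= a_i.
   (These all have degree d, so they form the minimal generating set.) *)
Definition veronese_gens (n d : nat) (a : 'I_n -> nat) : pred 'X_{1..n} :=
  [pred m : 'X_{1..n} | (mdeg m == d) && [forall i, (m i <= a i)%N]].

Definition shift_gens (n : nat) (c : 'X_{1..n}) (G : pred 'X_{1..n})
    : pred 'X_{1..n} :=
  [pred m : 'X_{1..n} | (c <= m)%MM && G (m - c)%MM].

(* Main.v *)
Require Import Defs.
From mathcomp Require Import all_boot all_algebra.
From mathcomp Require Import mpoly zify.
Import GRing.Theory.
Set Implicit Arguments. Unset Strict Implicit. Unset Printing Implicit Defensive.

Section Comb.
Variables (n : nat) (c : 'X_{1..n}).
Implicit Types (u v w x : 'X_{1..n}) (k l : 'I_n).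

Definition delta (u : 'X_{1..n}) := (\sum_(i < n) (c i - u i))%N.
Definition lexgt (w v : 'X_{1..n}) :=
  [exists k : 'I_n, [forall j : 'I_n, (j < k) ==> (w j == v j)] && (v k < w k)].
Definition rr (w v : 'X_{1..n}) :=
  (delta w < delta v) || ((delta w == delta v) && ((w == v) || lexgt w v)).
Definition rs (w v : 'X_{1..n}) :=
  (delta w < delta v) || ((delta w == delta v) && lexgt w v).
Definition exch (v : 'X_{1..n}) (k l : 'I_n) := (v - U_(l) + U_(k))%MM.

Lemma exchE v k l j : exch v k l j = (v j - (l == j) + (k == j))%N.
Proof. by rewrite mnmDE mnmBE !mnm1E. Qed.

Lemma sum_lt (F G : 'I_n -> nat) k : (forall i, F i <= G i) -> F k < G k ->
  \sum_i F i < \sum_i G i.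
Proof.
move=> le lt; rewrite (bigD1 k) //= [X in _ < X](bigD1 k) //=.
by rewrite -addSn leq_add // leq_sum.
Qed.

Lemma lexgtP w v : reflect (exists k : 'I_n, (forall j : 'I_n, j < k -> w j = v j) /\ v k < w k) (lexgt w v).
Proof.
apply: (iffP existsP) => [[k /andP [/forallP H lt]]|[k [H lt]]]; exists k.
  by split=> // j jk; apply/eqP; move: (H j); rewrite jk.
by rewrite lt andbT; apply/forallP => j; apply/implyP => /H ->.
Qed.

Lemma lexgt_asym w v : lexgt w v -> lexgt v w -> False.
Proof.
move=> /lexgtP [k1 [H1 l1]] /lexgtP [k2 [H2 l2]].
case: (ltngtP k1 k2) => [h|h|/val_inj e].
- by move: (H2 _ h) l1 => ->; rewrite ltnn.
- by move: (H1 _ h) l2 => ->; rewrite ltnn.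
- by subst; move: (ltn_trans l1 l2); rewrite ltnn.
Qed.

Lemma lexgt_irr w : lexgt w w = false.
Proof. by apply/negbTE/negP => h; exact: (lexgt_asym h h). Qed.

Lemma lexgt_trans u w v : lexgt w u -> lexgt u v -> lexgt w v.
Proof.
move=> /lexgtP [k1 [H1 l1]] /lexgtP [k2 [H2 l2]].
case: (ltngtP k1 k2) => [h|h|/val_inj e].
- apply/lexgtP; exists k1; split.
    by move=> j jk; rewrite H1 // H2 // (ltn_trans jk h).
  by rewrite -(H2 _ h).
- apply/lexgtP; exists k2; split.
    by move=> j jk; rewrite H1 ?H2 // (ltn_trans jk h).
  by rewrite (H1 _ h).
- subst; apply/lexgtP; exists k2; split; last exact: ltn_trans l2 l1.
  by move=> j jk; rewrite H1 ?H2.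
Qed.

Lemma lexgt_total w v : w != v -> lexgt w v || lexgt v w.
Proof.
move=> ne.
have [k0 hk0] : exists k, w k != v k.
  case: (boolP [exists k, w k != v k]) => [/existsP //|/existsPn H].
  by case/eqP: ne; apply/mnmP => i; move: (H i); rewrite negbK => /eqP.
case: (@arg_minnP _ k0 (fun k : 'I_n => w k != v k) (fun k : 'I_n => nat_of_ord k) hk0) => k hk kmin.
have H : forall j : 'I_n, j < k -> w j = v j.
  move=> j jk; apply/eqP; apply/negPn/negP => hj.
  by move: (kmin j hj); rewrite leqNgt jk.
case: (ltngtP (v k) (w k)) => [h|h|h]; last by rewrite h eqxx in hk.
- by apply/orP; left; apply/lexgtP; exists k.
- by apply/orP; right; apply/lexgtP; exists k; split=> // j /H ->.
Qed.

Lemma rr_total : total rr.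
Proof.
move=> w v; rewrite /rr; case: (ltngtP (delta w) (delta v)) => //= _.
rewrite [v == w]eq_sym; case: eqP => //= /eqP ne; exact: lexgt_total.
Qed.

Lemma rr_trans : transitive rr.
Proof.
move=> u w v /orP [h1|/andP [/eqP e1 h1]] /orP [h2|/andP [/eqP e2 h2]]; apply/orP.
- by left; apply: ltn_trans h1 h2.
- by left; rewrite -e2.
- by left; rewrite e1.
right; rewrite e1 e2 eqxx /=.
case/orP: h1 => [/eqP ->//|h1]; case/orP: h2 => [/eqP <-|h2]; first by rewrite h1 orbT.
by rewrite (lexgt_trans h1 h2) orbT.
Qed.

Lemma rs_of_rr w v : rr w v -> w != v -> rs w v.
Proof.
by rewrite /rr /rs => /orP [->//|/andP [-> /orP [->//|->]]]; rewrite orbT.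
Qed.

Lemma rr_rs_false u v : rr v u -> rs u v -> False.
Proof.
rewrite /rr /rs => /orP [h1|/andP [/eqP e1 h1]] /orP [h2|/andP [/eqP e2 h2]].
- by move: (ltn_trans h1 h2); rewrite ltnn.
- by move: h1; rewrite e2 ltnn.
- by move: h2; rewrite e1 ltnn.
case/orP: h1 => [/eqP e|h1]; first by move: h2; rewrite e lexgt_irr.
exact: lexgt_asym h1 h2.
Qed.


Lemma dA x k : x k < c k -> (delta (x + U_(k)) + 1 = delta x)%N.
Proof.
move=> h; rewrite /delta (bigD1 k) //= [in RHS](bigD1 k) //= mnmDE mnm1E eqxx.
rewrite (eq_bigr (fun i => c i - x i)); last first.
  by move=> i ik; rewrite mnmDE mnm1E eq_sym (negbTE ik) addn0.
lia.
Qed.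

Lemma dB x l : (delta (x - U_(l)) <= delta x + 1)%N.
Proof.
rewrite /delta (bigD1 l) //= [X in _ <= X + _](bigD1 l) //= mnmBE mnm1E eqxx.
rewrite (eq_bigr (fun i => c i - x i)); last first.
  by move=> i ik; rewrite mnmBE mnm1E eq_sym (negbTE ik) subn0.
lia.
Qed.

Lemma dC x l : c l < x l -> delta (x - U_(l)) = delta x.
Proof.
move=> h; apply: eq_bigr => i _; rewrite mnmBE mnm1E.
case: eqP => [<-|_]; rewrite /=; lia.
Qed.

Lemma dD x k : (delta (x + U_(k)) <= delta x)%N.
Proof. by apply: leq_sum => i _; rewrite mnmDE leq_sub2l // leq_addr. Qed.


Variables (d : nat) (a : 'I_n -> nat).
Definition GJ := veronese_gens (d + mdeg c) (fun i => a i + c i)%N.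
Definition GI := shift_gens c (veronese_gens d a).

Lemma GJP u : reflect (mdeg u = (d + mdeg c)%N /\ forall i, u i <= a i + c i) (GJ u).
Proof.
apply: (iffP andP) => [[/eqP -> /forallP H]|[-> H]]; first by split.
by split=> //; apply/forallP.
Qed.

Lemma mdeg_sub u : (c <= u)%MM -> mdeg u = (mdeg (u - c) + mdeg c)%N.
Proof. by move=> le; rewrite -mdegD submK. Qed.

Lemma GI_GJ u : GI u -> GJ u.
Proof.
case/andP => le /andP [/eqP hd /forallP H]; apply/GJP; split.
  by rewrite mdeg_sub // hd.
move=> i; move: (H i) (mnm_lepP le i); rewrite mnmBE; lia.
Qed.

Lemma GI_delta u : GI u -> delta u = 0.
Proof.
case/andP => /mnm_lepP le _; apply: big1 => i _; apply/eqP; rewrite subn_eq0; exact: le.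
Qed.

Lemma delta0_GI u : GJ u -> delta u = 0 -> GI u.
Proof.
move=> /GJP [hd hb] /eqP; rewrite /delta sum_nat_eq0 => /forallP H.
have le : (c <= u)%MM by apply/mnm_lepP => i; move: (H i); rewrite /= subn_eq0.
apply/andP; split=> //; apply/andP; split.
  by move: hd; rewrite mdeg_sub // => /eqP; rewrite eqn_add2r.
apply/forallP => i; rewrite mnmBE; move: (hb i); lia.
Qed.

Lemma GJ_exch v k l : GJ v -> k != l -> 0 < v l -> v k < a k + c k -> GJ (exch v k l).
Proof.
move=> /GJP [hd hb] kl vl vk; apply/GJP; split.
  rewrite mdegD mdeg1 -hd.
  have le : (U_(l) <= v)%MM.
    by apply/mnm_lepP => i; rewrite mnm1E; case: eqP => // <-.
  by rewrite -[in RHS](submK le) mdegD mdeg1.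
move=> i; rewrite exchE; move: (hb i).
case: (eqVneq k i) => [<-|ki]; first by rewrite eq_sym (negbTE kl) /=; lia.
case: (eqVneq l i) => [<-|li] /=; lia.
Qed.


Lemma core v w : 0 < d -> GJ v -> 0 < delta v -> GJ w -> w != v -> rs w v ->
  exists k l, v k < w k /\ GJ (exch v k l) /\ exch v k l != v /\ rs (exch v k l) v.
Proof.
move=> d0 GJv dv GJw ne.
move: (GJv) (GJw) => /GJP [hdv hbv] /GJP [hdw hbw].
move=> /orP [lt | /andP [/eqP eqd /lexgtP [k [Hk vk]]]].
  have [k [ck wk]] : exists k, v k < c k /\ v k < w k.
    case: (boolP [exists k, (v k < c k) && (v k < w k)]) =>
      [/existsP [k /andP [h1 h2]]|/existsPn H]; first by exists k.
    exfalso; have : delta v <= delta w.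
      apply: leq_sum => i _; move: (H i); rewrite negb_and -!leqNgt.
      case/orP => h; lia.
    lia.
  have [l cl] : exists l, c l < v l.
    case: (boolP [exists l, c l < v l]) => [/existsP //|/existsPn H]; exfalso.
    have : mdeg v <= mdeg c.
      by rewrite !mdegE; apply: leq_sum => i _; move: (H i); rewrite -leqNgt.
    rewrite hdv; lia.
  have kl : k != l by apply/eqP => e; subst; lia.
  have vl : 0 < v l by lia.
  exists k, l; split => //.
  have GJu : GJ (exch v k l) by apply: GJ_exch => //; move: (hbv k); lia.
  have du : (delta (exch v k l) + 1 = delta v)%N.
    rewrite /exch dA ?dC // mnmBE mnm1E eq_sym (negbTE kl) subn0 //.
  split => //; split.
    by apply/eqP => e; rewrite e in du; lia.
  by rewrite /rs; apply/orP; left; lia.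
have [l [wl hl]] : exists l, w l < v l /\ (v k < c k \/ c l < v l).
  case: (ltnP (v k) (c k)) => hck.
    case: (boolP [exists l, w l < v l]) => [/existsP [l h]|/existsPn H].
      by exists l; split => //; left.
    exfalso; have : mdeg v < mdeg w.
      rewrite !mdegE; apply: (@sum_lt _ _ k) => // i.
      by move: (H i); rewrite -leqNgt.
    by rewrite hdv hdw ltnn.
  case: (boolP [exists l, (w l < v l) && (c l < v l)]) =>
    [/existsP [l /andP [h1 h2]]|/existsPn H]; first by exists l; split => //; right.
  exfalso.
  have : \sum_i maxn (v i) (c i) < \sum_i maxn (w i) (c i).
    apply: (@sum_lt _ _ k); last by lia.
    move=> i; move: (H i); rewrite negb_and -!leqNgt; case/orP => h; lia.
  have E : forall u, \sum_i maxn (u i) (c i) = (delta u + mdeg u)%N.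
    move=> u; rewrite mdegE /delta -big_split; apply: eq_bigr => i _ /=; lia.
  by rewrite !E hdv hdw eqd ltnn.
have lk : k < l.
  case: (ltngtP k l) => // h.
    by move: (Hk l h) wl => ->; rewrite ltnn.
  by move/val_inj: h wl => <-; lia.
have kl : k != l by apply/eqP => e; subst; rewrite ltnn in lk.
have vl : 0 < v l by lia.
exists k, l; split => //.
have GJu : GJ (exch v k l) by apply: GJ_exch => //; move: (hbw k); lia.
have lexu : lexgt (exch v k l) v.
  apply/lexgtP; exists k; split.
    move=> j jk; rewrite exchE.
    have lj : l != j by apply/eqP => e; subst; lia.
    have kj : k != j by apply/eqP => e; subst; rewrite ltnn in jk.
    by rewrite (negbTE lj) (negbTE kj) subn0 addn0.
  rewrite exchE eq_sym (negbTE kl) eqxx /=; lia.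
have ddu : delta (exch v k l) <= delta v.
  case: hl => h.
    have := @dA (v - U_(l))%MM k.
    rewrite mnmBE mnm1E eq_sym (negbTE kl) subn0 => /(_ h).
    have := dB v l; rewrite /exch; lia.
  by rewrite /exch; apply: leq_trans (dD _ _) _; rewrite dC.
split => //; split.
  by apply/eqP => e; rewrite e lexgt_irr in lexu.
rewrite /rs; move: ddu; rewrite leq_eqVlt => /orP [/eqP ->|->] //.
by rewrite eqxx lexu orbT.
Qed.

End Comb.

Local Open Scope ring_scope.
Section Alg.
Variables (K : fieldType) (n : nat).
Implicit Types (G H : pred 'X_{1..n}) (p : {mpoly K[n]}).

Lemma imi0 G : in_mon_ideal G (0 : {mpoly K[n]}).
Proof. by exists [::], [::]; split=> //; rewrite big_ord0. Qed.

Lemma imi1 G g (r : {mpoly K[n]}) : G g -> in_mon_ideal G (r * 'X_[g]).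
Proof. by move=> Gg; exists [:: g], [:: r]; split; rewrite /= ?Gg // big_ord1. Qed.

Lemma imiD G p q : in_mon_ideal G p -> in_mon_ideal G q -> in_mon_ideal G (p + q).
Proof.
move=> [gs [rs [Hg Hs ->]]] [gs' [rs' [Hg' Hs' ->]]].
exists (gs ++ gs'), (rs ++ rs'); split.
- by rewrite all_cat Hg Hg'.
- by rewrite !size_cat Hs Hs'.
rewrite size_cat big_split_ord /=; congr (_ + _); apply: eq_bigr => i _ /=.
  by rewrite !nth_cat Hs ltn_ord.
by rewrite !nth_cat Hs ltnNge leq_addr /= addKn.
Qed.

Lemma imiP G p : in_mon_ideal G p <->
  (forall m, m \in msupp p -> exists g, G g /\ (g <= m)%MM).
Proof.
split.
  move=> [gs [rs [Hg Hs ->]]] m /msupp_sum_le /flattenP [s /mapP [i _ ->]].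
  rewrite (perm_mem (msuppMX _ _)) => /mapP [m' _ ->].
  exists (nth 0%MM gs i); split; first by apply: (allP Hg); rewrite mem_nth.
  by apply/mnm_lepP => j; rewrite mnmDE leq_addr.
move=> H; rewrite [p]mpolyE; rewrite big_seq.
apply: (big_ind (in_mon_ideal G)); [exact: imi0 | exact: imiD |].
move=> m /H [g [Gg le]].
rewrite -(submK le) mpolyXD scalerAl.
by apply: imi1.
Qed.

Lemma colon_pw G v (S : {set 'I_n}) :
  (forall m, (exists g, G g /\ (g <= v + m)%MM) <-> (exists k, k \in S /\ (0 < m k)%N)) ->
  colon_gen_by_vars K G v.
Proof.
move=> HS; exists S => p; rewrite !imiP; split.
  move=> H m hm.
  have /H [g [Gg le]] : (v + m)%MM \in msupp (p * 'X_[v]).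
    by rewrite (perm_mem (msuppMX _ _)); apply: map_f.
  have [k [kS mk]] : exists k, k \in S /\ (0 < m k)%N by apply/HS; exists g.
  exists U_(k)%MM; split; first by apply/existsP; exists k; rewrite kS eqxx.
  by apply/mnm_lepP => j; rewrite mnm1E; case: eqP => // <-.
move=> H m'; rewrite (perm_mem (msuppMX _ _)) => /mapP [m /H [g [/existsP [i /andP [iS /eqP ->]] le]] ->].
apply/HS; exists i; split => //.
by move/mnm_lepP: le => /(_ i); rewrite mnm1E eqxx.
Qed.
End Alg.

Local Close Scope ring_scope.

Theorem lemma3p6 (K : fieldType) (n d : nat) (a : 'I_n -> nat)
    (c : 'X_{1..n}) :
  (0 < d)%N -> (forall i, 0 < a i)%N ->
  ext_lin_quot K (shift_gens c (veronese_gens d a))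
    (veronese_gens (d + mdeg c) (fun i => a i + c i)%N).
Proof.
move=> d0 _.
split; first by move=> u; exact: GI_GJ.
pose L := [seq val m | m <- enum {: 'X_{1..n < (d + mdeg c).+1}} &
             GJ c d a (val m) && ~~ GI c d a (val m)].
pose vs := sort (rr c) (undup L).
have memvs : forall m, (m \in vs) = GJ c d a m && ~~ GI c d a m.
  move=> m; rewrite mem_sort mem_undup; apply/idP/idP.
    by case/mapP => x; rewrite mem_filter => /andP [h _] ->.
  move=> h; have hb : mdeg m < (d + mdeg c).+1.
    by move: h => /andP [/GJP [-> _] _].
  by apply/mapP; exists (@BMultinom n _ m hb) => //; rewrite mem_filter h mem_enum.
have uvs : uniq vs by rewrite sort_uniq undup_uniq.
have svs : sorted (rr c) vs := sort_sorted (@rr_total n c) _.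
exists vs; split => //.
move=> i hi.
set v := nth 0%MM vs i.
have vin : v \in vs := mem_nth _ hi.
have /andP [GJv nGIv] : GJ c d a v && ~~ GI c d a v by rewrite -memvs.
have dv : 0 < delta c v.
  by rewrite lt0n; apply/negP => /eqP h; rewrite (delta0_GI GJv h) in nGIv.
have takeP : forall g, reflect (exists2 j, j < i & nth 0%MM vs j = g) (g \in take i vs).
  move=> g; apply: (iffP (nthP 0%MM)) => [[j]|[j ji <-]].
    rewrite size_take hi => ji; rewrite nth_take // => <-; by exists j.
  by exists j; rewrite ?size_take ?hi ?nth_take.
set G := [pred m | GI c d a m || (m \in take i vs)].
have G_GJ : forall g, G g -> GJ c d a g.
  move=> g /orP [/GI_GJ //|/mem_take]; rewrite memvs => /andP [] //.
have G_ne : forall g, G g -> g != v.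
  move=> g /orP [h|/takeP [j ji <-]]; first by apply/eqP => e; rewrite -e h in nGIv.
  rewrite /v nth_uniq //; first by rewrite neq_ltn ji.
  exact: ltn_trans ji hi.
have G_rs : forall g, G g -> rs c g v.
  move=> g Gg; apply: rs_of_rr; last exact: G_ne.
  case/orP: Gg => [h|/takeP [j ji <-]]; first by rewrite /rr (GI_delta h) dv.
  apply: (sorted_ltn_nth (@rr_trans n c)) => //; rewrite inE //.
  exact: ltn_trans ji hi.
have rs_G : forall u, GJ c d a u -> u != v -> rs c u v -> G u.
  move=> u GJu ne rsu; apply/orP; case: (boolP (GI c d a u)) => [h|nGI]; first by left.
  right; have : u \in vs by rewrite memvs GJu nGI.
  case/(nthP 0%MM) => j js uj; apply/takeP; exists j => //.
  case: (ltngtP j i) => // h.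
    exfalso; apply: (@rr_rs_false n c u v) rsu.
    rewrite -uj; apply: (sorted_ltn_nth (@rr_trans n c)) => //.
  by move: ne; rewrite -uj h eqxx.
apply: (@colon_pw K n G v [set k | [exists l, G (exch v k l)]]).
move=> m; split.
  case=> g [Gg le].
  have [k [l [vk [GJu [neu rsu]]]]] := core d0 GJv dv (G_GJ _ Gg) (G_ne _ Gg) (G_rs _ Gg).
  exists k; split.
    by rewrite inE; apply/existsP; exists l; apply: rs_G.
  by move/mnm_lepP: le => /(_ k); rewrite mnmDE; lia.
case=> k [kS mk]; move: kS; rewrite inE => /existsP [l Gu].
exists (exch v k l); split => //; apply/mnm_lepP => j; rewrite exchE mnmDE.
by case: (eqVneq k j) => [<-|kj] /=; lia.
Qed.
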